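(* For every Bayesian network $(X_v)_{v\in V}$ on a finite DAG $\mathcal G$ with states $\mathcal A$ and full support, and every surjection $f:\mathcal A\to\mathcal B$, we have (D3) $\Rightarrow$ (D2) $\Rightarrow$ (D1). Moreover, neither implication can be reversed in general: there exist a DAG, a BN with full support and a surjection $f$ for which (D1) holds but (D2) fails, and there exist a DAG, a BN with full support and a surjection $f$ for which (D2) holds but (D3) fails.
   Context: $\mathcal G=(V,E)$ is a finite directed acyclic graph; $pa(v)$ is the set of parents of $v$, $nd(v)$ the set of non-descendants (vertices other than $v$ not reachable from $v$ by a directed path), $V_s=\{v:pa(v)=\emptyset\}$ the source nodes, $V_p=V\setminus V_s$. $\mathcal A,\mathcal B$ are finite sets with $|\mathcal A|>|\mathcal B|$ and $f:\mathcal A\to\mathcal B$ a surjection, applied coordinatewise to tuples. A Bayesian network (BN) on $\mathcal G$ with states $\mathcal A$ is specified by a distribution $\alpha_v$ on $\mathcal A$ for each $v\in V_s$ (the initial distribution) and, for each $v\in V_p$ and $a_{pa(v)}\in\mathcal A^{pa(v)}$, a distribution $P_v(\cdot\mid a_{pa(v)})$ on $\mathcal A$ (the CPDs); the random vector $(X_v)_{v\in V}$ has $\mathbb P(X=x)=\prod_{v\in V_s}\alpha_v(x_v)\prod_{v\in V_p}P_v(x_v\mid x_{pa(v)})$. Full support means every $x\in\mathcal A^V$ has positive probability. For an initial distribution $\tilde\alpha=(\tilde\alpha_v)_{v\in V_s}$, $X[\tilde\alpha]$ is the random vector obtained by replacing $\alpha$ by $\tilde\alpha$ and keeping all CPDs,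 with law $\mathbb P_{\tilde\alpha}$. $U_v=f(X_v)$, $U[\tilde\alpha]=f(X[\tilde\alpha])$. A random vector $(Y_v)_{v\in V}$ with finitely many values factorises over $\mathcal G$ if $\mathbb P(Y=y)=\prod_v q_v(y_v\mid y_{pa(v)})$ for some conditional distributions $q_v$ (equivalently $Y_v$ is conditionally independent of $Y_{nd(v)\setminus pa(v)}$ given $Y_{pa(v)}$ for all $v$). Conditions: (D1) $(U_v)_{v\in V}$ factorises over $\mathcal G$. (D2) for every initial distribution $\tilde\alpha$, $U[\tilde\alpha]$ factorises over $\mathcal G$. (D3) for every $\tilde\alpha$, $U[\tilde\alpha]$ factorises over $\mathcal G$, and for every $v\in V_p$, $b_v\in\mathcal B$, $b_{pa(v)}\in\mathcal B^{pa(v)}$, the value $\mathbb P_{\tilde\alpha}(U_v=b_v\mid U_{pa(v)}=b_{pa(v)})$ is the same for all $\tilde\alpha$ with $\mathbb P_{\tilde\alpha}(U_{pa(v)}=b_{pa(v)})>0$. *)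

(* Defs.v *)
From HB Require Import structures.
From mathcomp Require Import all_boot all_order all_algebra.
From mathcomp Require Import reals.
Set Implicit Arguments. Unset Strict Implicit. Unset Printing Implicit Defensive.
Import Order.TTheory GRing.Theory Num.Theory.
Local Open Scope ring_scope.

Section BN.
Variable R : realType.

Section Graph.
Variable V : finType.
Variable pa : V -> {set V}.

Definition dag_edge : rel V := fun u w => u \in pa w.

Definition acyclic : Prop := forall u w, u \in pa w -> ~~ connect dag_edge w u.

Definition nd (v : V) : {set V} := [set w | (w != v) && ~~ connect dag_edge v w].

Definition sources : {set V} := [set v | pa v == set0].

Definition local_in (T X : Type) (v : V) (q : {ffun V -> T} -> X) : Prop :=
  forall y z : {ffun V -> T}, (forall u, u \in pa v -> y u = z u) -> q y = q z.
End Graph.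

Definition is_distr (T : finType) (p : T -> R) : Prop :=
  (forall t, 0 <= p t) /\ \sum_(t : T) p t = 1.

Section Network.
Variables (V A B : finType) (pa : V -> {set V}) (f : A -> B).

Definition init_distr (alpha : V -> A -> R) : Prop :=
  forall v, v \in sources pa -> is_distr (alpha v).

(* CPDs: P v x a = P_v(a | x_{pa(v)}), depending only on x restricted to pa v *)
Definition CPDs (P : V -> {ffun V -> A} -> A -> R) : Prop :=
  forall v, v \notin sources pa ->
    local_in pa v (P v) /\ forall x, is_distr (P v x).

Definition is_BN (alpha : V -> A -> R) (P : V -> {ffun V -> A} -> A -> R) : Prop :=
  init_distr alpha /\ CPDs P.

Definition jointX (alpha : V -> A -> R) (P : V -> {ffun V -> A} -> A -> R)
  (x : {ffun V -> A}) : R :=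
  (\prod_(v in sources pa) alpha v (x v)) *
  (\prod_(v in ~: sources pa) P v x (x v)).

Definition full_support alpha P : Prop := forall x, 0 < jointX alpha P x.

Definition lawU alpha P (u : {ffun V -> B}) : R :=
  \sum_(x : {ffun V -> A} | [forall v, f (x v) == u v]) jointX alpha P x.

Definition probU alpha P (E : pred {ffun V -> B}) : R :=
  \sum_(u | E u) lawU alpha P u.

Definition ev_pa (v : V) (y : {ffun V -> B}) : pred {ffun V -> B} :=
  fun u => [forall w in pa v, u w == y w].

Definition ev_v_pa (v : V) (b : B) (y : {ffun V -> B}) : pred {ffun V -> B} :=
  fun u => (u v == b) && ev_pa v y u.

Definition condU alpha P (v : V) (b : B) (y : {ffun V -> B}) : R :=
  probU alpha P (ev_v_pa v b y) / probU alpha P (ev_pa v y).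

End Network.

Definition factorises (V T : finType) (pa : V -> {set V})
  (p : {ffun V -> T} -> R) : Prop :=
  exists q : V -> {ffun V -> T} -> T -> R,
    (forall v, local_in pa v (q v)) /\
    (forall v y, is_distr (q v y)) /\
    (forall y, p y = \prod_(v : V) q v y (y v)).

Section Conditions.
Variables (V A B : finType) (pa : V -> {set V}) (f : A -> B).
Variables (alpha : V -> A -> R) (P : V -> {ffun V -> A} -> A -> R).

Definition D1 : Prop := factorises pa (lawU pa f alpha P).

Definition D2 : Prop :=
  forall alpha', init_distr pa alpha' -> factorises pa (lawU pa f alpha' P).

Definition D3 : Prop :=
  D2 /\
  forall v, v \notin sources pa -> forall (b : B) (y : {ffun V -> B}),
  forall alpha1 alpha2, init_distr pa alpha1 -> init_distr pa alpha2 ->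
    0 < probU pa f alpha1 P (ev_pa pa v y) ->
    0 < probU pa f alpha2 P (ev_pa pa v y) ->
    condU pa f alpha1 P v b y = condU pa f alpha2 P v b y.
End Conditions.

End BN.

(* Main.v *)
Require Import Defs.
From HB Require Import structures.
From mathcomp Require Import all_boot all_order all_algebra.
From mathcomp Require Import reals ring lra.
Set Implicit Arguments. Unset Strict Implicit. Unset Printing Implicit Defensive.
Import Order.TTheory GRing.Theory Num.Theory.
Local Open Scope ring_scope.

Definition o0 : 'I_3 := @Ordinal 3 0 isT.
Definition o1 : 'I_3 := @Ordinal 3 1 isT.
Definition o2 : 'I_3 := @Ordinal 3 2 isT.

Lemma ord3P (i : 'I_3) : [\/ i = o0, i = o1 | i = o2].
Proof.
case: i => [[|[|[|m]]] Hm].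
- by apply: Or31; apply: val_inj.
- by apply: Or32; apply: val_inj.
- by apply: Or33; apply: val_inj.
- by [].
Qed.

Lemma sum3I (R : realType) (F : 'I_3 -> R) : \sum_(i : 'I_3) F i = F o0 + F o1 + F o2.
Proof.
rewrite !big_ord_recl big_ord0 addr0 addrA.
by congr (F _ + F _ + F _); apply: val_inj.
Qed.

Lemma prod3I (R : realType) (F : 'I_3 -> R) : \prod_(i : 'I_3) F i = F o0 * F o1 * F o2.
Proof.
rewrite !big_ord_recl big_ord0 mulr1 mulrA.
by congr (F _ * F _ * F _); apply: val_inj.
Qed.

Lemma sumB (R : realType) (F : bool -> R) : \sum_(i : bool) F i = F true + F false.
Proof. by rewrite big_bool. Qed.

Lemma forall3 (P : pred 'I_3) : [forall i, P i] = [&& P o0, P o1 & P o2].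
Proof.
apply/forallP/and3P => [H|[H0 H1 H2] i]; first by split; apply: H.
by case: (ord3P i) => ->.
Qed.

Definition mk (T : Type) (a b c : T) : {ffun 'I_3 -> T} :=
  [ffun i : 'I_3 => if val i == 0%N then a else if val i == 1%N then b else c].

Lemma mk0 T (a b c : T) : mk a b c o0 = a. Proof. by rewrite ffunE. Qed.
Lemma mk1 T (a b c : T) : mk a b c o1 = b. Proof. by rewrite ffunE. Qed.
Lemma mk2 T (a b c : T) : mk a b c o2 = c. Proof. by rewrite ffunE. Qed.

Lemma mkK T (x : {ffun 'I_3 -> T}) : mk (x o0) (x o1) (x o2) = x.
Proof. by apply/ffunP => i; case: (ord3P i) => ->; rewrite ?mk0 ?mk1 ?mk2. Qed.

Lemma sum_ffun3 (R : realType) (T : finType) (Q : pred {ffun 'I_3 -> T})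
   (G : {ffun 'I_3 -> T} -> R) :
  \sum_(x | Q x) G x =
  \sum_(a : T) \sum_(b : T) \sum_(c : T) (if Q (mk a b c) then G (mk a b c) else 0).
Proof.
rewrite big_mkcond /=.
rewrite (reindex (fun p : T * (T * T) => mk p.1 p.2.1 p.2.2)) /=; last first.
  exists (fun x => (x o0, (x o1, x o2))) => [[a [b c]] _|x _] /=.
    by rewrite mk0 mk1 mk2.
  by rewrite mkK.
under [RHS]eq_bigr => a _ do rewrite pair_bigA.
by rewrite pair_bigA /=.
Qed.

Definition pa_ch (v : 'I_3) : {set 'I_3} :=
  if val v == 1%N then [set o0] else if val v == 2%N then [set o1] else set0.
Definition fch (a : 'I_3) : bool := val a == 2%N.
Definition Pch (R : realType) (p1 p2 : 'I_3 -> 'I_3 -> R)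
  : 'I_3 -> {ffun 'I_3 -> 'I_3} -> 'I_3 -> R :=
  fun v x a => if val v == 1%N then p1 (x o0) a else p2 (x o1) a.

Lemma edge_lt u w : u \in pa_ch w -> (val u < val w)%N.
Proof.
rewrite /pa_ch; case: (ord3P w) => -> /=.
- by rewrite inE.
- by rewrite inE => /eqP ->.
- by rewrite inE => /eqP ->.
Qed.

Lemma acyclic_ch : acyclic pa_ch.
Proof.
move=> u w uw; apply/negP => /connectP [p Hp Hl].
have key : forall p x, path (dag_edge pa_ch) x p -> (val x <= val (last x p))%N.
  elim=> [|y q IH] x //= /andP [Hxy Hq].
  apply: leq_trans (IH _ Hq); exact: ltnW (edge_lt Hxy).
have := key _ _ Hp; rewrite -Hl => H.
have := edge_lt uw; rewrite ltnNge H //.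
Qed.

Lemma in_sources v : (v \in sources pa_ch) = (val v == 0%N).
Proof.
rewrite inE /pa_ch; case: (ord3P v) => -> //=.
- by rewrite eqxx.
- by apply/negbTE/set0Pn; exists o0; rewrite inE.
- by apply/negbTE/set0Pn; exists o1; rewrite inE.
Qed.

Lemma jointX_ch (R : realType) (al : 'I_3 -> 'I_3 -> R) p1 p2 x :
  jointX pa_ch al (Pch p1 p2) x = al o0 (x o0) * (p1 (x o0) (x o1) * p2 (x o1) (x o2)).
Proof.
rewrite /jointX (big_mkcond (fun v => v \in sources pa_ch))
   (big_mkcond (fun v => v \in ~: sources pa_ch)) /= !prod3I.
by rewrite !in_setC !in_sources /= /Pch /= !mul1r !mulr1.
Qed.

Lemma probU_x (R : realType) (V A B : finType) (pa : V -> {set V}) (f : A -> B)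
  (al : V -> A -> R) P (E : pred {ffun V -> B}) :
  probU pa f al P E = \sum_(x : {ffun V -> A} | E [ffun v => f (x v)]) jointX pa al P x.
Proof.
rewrite (partition_big (fun x : {ffun V -> A} => [ffun v => f (x v)]) E) //=.
apply: eq_bigr => u Eu; apply: eq_bigl => x.
apply/idP/idP.
- move=> /forallP H; have ->: [ffun v => f (x v)] = u by apply/ffunP => v; rewrite ffunE; apply/eqP/H.
  by rewrite Eu eqxx.
- by case/andP => _ /eqP <-; apply/forallP => v; rewrite ffunE.
Qed.

Lemma fmk (a b c : 'I_3) : [ffun v => fch (mk a b c v)] = mk (fch a) (fch b) (fch c).
Proof. by apply/ffunP => v; rewrite !ffunE; case: ifP => //; case: ifP. Qed.

Lemma probU_ch (R : realType) (al : 'I_3 -> 'I_3 -> R) p1 p2 E :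
  probU pa_ch fch al (Pch p1 p2) E =
  \sum_(a : 'I_3) \sum_(b : 'I_3) \sum_(c : 'I_3)
     (if E (mk (fch a) (fch b) (fch c)) then al o0 a * (p1 a b * p2 b c) else 0).
Proof.
rewrite probU_x sum_ffun3; do 3! (apply: eq_bigr => ? _).
by rewrite fmk jointX_ch mk0 mk1 mk2.
Qed.

Lemma lawU_ch (R : realType) (al : 'I_3 -> 'I_3 -> R) p1 p2 u :
  lawU pa_ch fch al (Pch p1 p2) u =
  \sum_(a : 'I_3) \sum_(b : 'I_3) \sum_(c : 'I_3)
     (if [&& fch a == u o0, fch b == u o1 & fch c == u o2]
      then al o0 a * (p1 a b * p2 b c) else 0).
Proof.
rewrite /lawU sum_ffun3; do 3! (apply: eq_bigr => ? _).
by rewrite forall3 jointX_ch !mk0 !mk1 !mk2.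
Qed.


Definition tab3 (R : realType) (r0 r1 r2 : R) (a : 'I_3) : R :=
  if val a == 0%N then r0 else if val a == 1%N then r1 else r2.

Lemma sources_o0 : o0 \in sources pa_ch. Proof. by rewrite in_sources. Qed.
Lemma notsrc v : v \notin sources pa_ch -> v = o1 \/ v = o2.
Proof. by rewrite in_sources; case: (ord3P v) => -> //; [left|right]. Qed.

Lemma local_o1 (T X : Type) (q : {ffun 'I_3 -> T} -> X) (y z : {ffun 'I_3 -> T}) :
  local_in pa_ch o1 q -> y o0 = z o0 -> q y = q z.
Proof. move=> H e; apply: H => u; rewrite /pa_ch /= inE => /eqP ->; exact e. Qed.
Lemma local_o2 (T X : Type) (q : {ffun 'I_3 -> T} -> X) (y z : {ffun 'I_3 -> T}) :
  local_in pa_ch o2 q -> y o1 = z o1 -> q y = q z.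
Proof. move=> H e; apply: H => u; rewrite /pa_ch /= inE => /eqP ->; exact e. Qed.
Lemma local_o0 (T X : Type) (q : {ffun 'I_3 -> T} -> X) (y z : {ffun 'I_3 -> T}) :
  local_in pa_ch o0 q -> q y = q z.
Proof. move=> H; apply: H => u; by rewrite /pa_ch /= in_set0. Qed.

Lemma CPDs_ch (R : realType) (p1 p2 : 'I_3 -> 'I_3 -> R) :
  (forall a, is_distr (p1 a)) -> (forall a, is_distr (p2 a)) ->
  CPDs pa_ch (Pch p1 p2).
Proof.
move=> H1 H2 v /notsrc [] -> ; split.
- by move=> y z H; rewrite /Pch /= H // /pa_ch /= inE.
- by move=> x; rewrite /Pch /=; apply: H1.
- by move=> y z H; rewrite /Pch /= H // /pa_ch /= inE.
- by move=> x; rewrite /Pch /=; apply: H2.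
Qed.

Lemma tab3_distr (R : realType) (r0 r1 r2 : R) :
  0 <= r0 -> 0 <= r1 -> 0 <= r2 -> r0 + r1 + r2 = 1 -> is_distr (tab3 r0 r1 r2).
Proof.
move=> h0 h1 h2 hs; split; first by move=> t; case: (ord3P t) => ->.
by rewrite sum3I.
Qed.

Lemma is_distr3 (R : realType) (p : 'I_3 -> R) :
   is_distr p -> [/\ 0 <= p o0, 0 <= p o1, 0 <= p o2 & p o0 + p o1 + p o2 = 1].
Proof. by case=> h hs; split => //; rewrite -sum3I. Qed.

Lemma surj_ch (b : bool) : exists a, fch a = b.
Proof. by case: b; [exists o2 | exists o0]. Qed.

Lemma card_ch : (#|{: bool}| < #|{: 'I_3}|)%N.
Proof. by rewrite card_bool card_ord. Qed.

Section Ex2.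
Variable R : realType.

Definition al2 : 'I_3 -> 'I_3 -> R := fun _ => tab3 (1/3) (1/3) (1/3).
Definition p1e2 (a : 'I_3) : 'I_3 -> R :=
  if val a == 0%N then tab3 (1/2) (1/4) (1/4)
  else if val a == 1%N then tab3 (1/4) (1/2) (1/4) else tab3 (3/8) (3/8) (1/4).
Definition p2e2 (a : 'I_3) : 'I_3 -> R :=
  if val a == 0%N then tab3 (1/2) (1/4) (1/4)
  else if val a == 1%N then tab3 (1/8) (1/8) (3/4) else tab3 (1/3) (1/3) (1/3).
Definition al2' : 'I_3 -> 'I_3 -> R := fun _ => tab3 (1/2) 0 (1/2).

Lemma p1e2_d a : is_distr (p1e2 a).
Proof. by case: (ord3P a) => -> /=; apply: tab3_distr; lra. Qed.
Lemma p2e2_d a : is_distr (p2e2 a).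
Proof. by case: (ord3P a) => -> /=; apply: tab3_distr; lra. Qed.

Lemma ex2_BN : is_BN pa_ch al2 (Pch p1e2 p2e2).
Proof.
split; last by apply: CPDs_ch; [exact: p1e2_d | exact: p2e2_d].
by move=> v _; apply: tab3_distr; lra.
Qed.

Lemma ex2_full : full_support pa_ch al2 (Pch p1e2 p2e2).
Proof.
move=> x; rewrite jointX_ch.
by case: (ord3P (x o0)) => ->; case: (ord3P (x o1)) => ->;
   case: (ord3P (x o2)) => ->; rewrite /al2 /p1e2 /p2e2 /tab3 /=; lra.
Qed.

Definition q2 (v : 'I_3) (y : {ffun 'I_3 -> bool}) (t : bool) : R :=
  if val v == 0%N then (if t then 1/3 else 2/3)
  else if val v == 1%N then (if t then 1/4 else 3/4)
  else if y o1 then (if t then 1/3 else 2/3) else 1/2.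

Lemma ex2_D1 : D1 pa_ch fch al2 (Pch p1e2 p2e2).
Proof.
exists q2; split; [|split].
- move=> v y z; case: (ord3P v) => -> H; rewrite /q2 //=.
  by rewrite H // /pa_ch /= inE.
- move=> v y; split.
  + by move=> t; case: (ord3P v) => ->; rewrite /q2 /=; case: t; case: (y o1); lra.
  + by rewrite sumB; case: (ord3P v) => ->; rewrite /q2 /=; case: (y o1); lra.
- move=> u; rewrite lawU_ch prod3I !sum3I /q2 /al2 /p1e2 /p2e2 /tab3 /=.
  by case: (u o0); case: (u o1); case: (u o2); rewrite /=; lra.
Qed.

Lemma ex2_notD2 : ~ D2 pa_ch fch (Pch p1e2 p2e2).
Proof.
move=> H.
have [q [Hl [_ Hp]]] : factorises pa_ch (lawU pa_ch fch al2' (Pch p1e2 p2e2)).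
  by apply: H => v _; apply: tab3_distr; lra.
pose u a b := mk a false b.
have E a b : lawU pa_ch fch al2' (Pch p1e2 p2e2) (u a b) =
   q o0 (u false false) a * q o1 (u a false) false * q o2 (u false false) b.
  rewrite Hp prod3I /u !mk0 !mk1 !mk2.
  rewrite (local_o0 _ (mk false false false) (Hl o0)).
  rewrite (@local_o1 _ _ _ (mk a false b) (mk a false false) (Hl o1)); last by rewrite !mk0.
  by rewrite (@local_o2 _ _ _ (mk a false b) (mk false false false) (Hl o2)) // !mk1.
have V a b : lawU pa_ch fch al2' (Pch p1e2 p2e2) (u a b) =
   if a then 3/16 else if b then 5/32 else 7/32.
  by rewrite lawU_ch !sum3I /u !mk0 !mk1 !mk2 /al2' /p1e2 /p2e2 /tab3; case: a; case: b => /=; lra.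
have : (7/32 : R) * (3/16) = 5/32 * (3/16).
  rewrite -[X in X * _ = _](V false false) -[X in _ * X = _](V true true).
  rewrite -[X in _ = X * _](V false true) -[X in _ = _ * X](V true false).
  rewrite !E; ring.
lra.
Qed.
End Ex2.

Section Ex3.
Variable R : realType.

Definition al3 : 'I_3 -> 'I_3 -> R := fun _ => tab3 (1/3) (1/3) (1/3).
Definition p1e3 (a : 'I_3) : 'I_3 -> R :=
  if val a == 0%N then tab3 (1/2) (1/4) (1/4)
  else if val a == 1%N then tab3 (1/4) (1/4) (1/2) else tab3 (1/3) (1/3) (1/3).
Definition p2e3 (a : 'I_3) : 'I_3 -> R := tab3 (1/3) (1/3) (1/3).

Lemma p1e3_d a : is_distr (p1e3 a).
Proof. by case: (ord3P a) => -> /=; apply: tab3_distr; lra. Qed.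
Lemma p2e3_d a : is_distr (p2e3 a).
Proof. by apply: tab3_distr; lra. Qed.

Lemma ex3_BN : is_BN pa_ch al3 (Pch p1e3 p2e3).
Proof.
split; last by apply: CPDs_ch; [exact: p1e3_d | exact: p2e3_d].
by move=> v _; apply: tab3_distr; lra.
Qed.

Lemma ex3_full : full_support pa_ch al3 (Pch p1e3 p2e3).
Proof.
move=> x; rewrite jointX_ch.
by case: (ord3P (x o0)) => ->; case: (ord3P (x o1)) => ->;
   case: (ord3P (x o2)) => ->; rewrite /al3 /p1e3 /p2e3 /tab3 /=; lra.
Qed.

Definition A0 (al : 'I_3 -> R) (t : bool) : R :=
  if t then al o2 else al o0 + al o1.
Definition N3 (al : 'I_3 -> R) (s t : bool) : R :=
  if s then (if t then al o2 / 3 else al o2 * 2 / 3)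
  else (if t then al o0 / 4 + al o1 / 2 else al o0 * 3 / 4 + al o1 / 2).
Definition G3 (t : bool) : R := if t then 1/3 else 2/3.

Definition q3 (al : 'I_3 -> R) (v : 'I_3) (y : {ffun 'I_3 -> bool}) (t : bool) : R :=
  if val v == 0%N then A0 al t
  else if val v == 1%N then
    (if A0 al (y o0) == 0 then (if t then 0 else 1) else N3 al (y o0) t / A0 al (y o0))
  else G3 t.

Lemma ex3_D2 : D2 pa_ch fch (Pch p1e3 p2e3).
Proof.
move=> al Hal.
case: (is_distr3 (Hal o0 sources_o0)) => h0 h1 h2 hs.
exists (q3 (al o0)); split; [|split].
- move=> v y z; case: (ord3P v) => -> H; rewrite /q3 //=.
  by rewrite H // /pa_ch /= inE.
- move=> v y; case: (ord3P v) => ->; rewrite /q3 /=.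
  + by split; [case; rewrite /A0 /=; lra | rewrite sumB /A0; lra].
  + case: eqP => hA.
      by split; [case; lra | rewrite sumB; lra].
    have hA' : 0 < A0 (al o0) (y o0).
      rewrite lt_def; apply/andP; split; first by apply/eqP.
      by rewrite /A0; case: (y o0); lra.
    split.
      move=> t; apply: divr_ge0; last exact: ltW.
      by rewrite /N3; case: (y o0); case: t; lra.
    rewrite sumB -mulrDl.
    have -> : N3 (al o0) (y o0) true + N3 (al o0) (y o0) false = A0 (al o0) (y o0).
      by rewrite /N3 /A0; case: (y o0); lra.
    by rewrite divff //; apply/eqP.
  + by split; [case; rewrite /G3; lra | rewrite sumB /G3; lra].
- move=> u.
  have L : lawU pa_ch fch al (Pch p1e3 p2e3) u = N3 (al o0) (u o0) (u o1) * G3 (u o2).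
    rewrite lawU_ch !sum3I /N3 /G3 /p1e3 /p2e3 /tab3.
    case: (u o0); case: (u o1); case: (u o2) => /=; lra.
  rewrite L prod3I /q3 /=.
  case: eqP => hA.
    rewrite hA !mul0r.
    move: hA; rewrite /A0 /N3 /G3; case: (u o0); case: (u o1); case: (u o2) => hA; lra.
  rewrite [A0 _ _ * _]mulrC divfK; last by apply/eqP.
  done.
Qed.

Definition pt (k : 'I_3) : 'I_3 -> 'I_3 -> R := fun _ a => if a == k then 1 else 0.

Lemma pt_init k : init_distr pa_ch (pt k).
Proof.
move=> v _; split; first by move=> t; rewrite /pt; case: (t == k).
rewrite sum3I /pt; case: (ord3P k) => -> /=; lra.
Qed.

Lemma ev_pa_o1 (y u : {ffun 'I_3 -> bool}) : ev_pa pa_ch o1 y u = (u o0 == y o0).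
Proof. by rewrite /ev_pa forall3 /pa_ch /= !inE /= andbT. Qed.

Lemma ex3_notD3 : ~ D3 pa_ch fch (Pch p1e3 p2e3).
Proof.
case=> _ H.
pose y : {ffun 'I_3 -> bool} := [ffun _ => false].
have Hy : y o0 = false by rewrite ffunE.
have P1 k : k != o2 -> probU pa_ch fch (pt k) (Pch p1e3 p2e3) (ev_pa pa_ch o1 y) = 1.
  move=> hk; rewrite probU_ch !sum3I !ev_pa_o1 !mk0 Hy /pt /p1e3 /p2e3 /tab3.
  by move: hk; case: (ord3P k) => -> //= _; lra.
have Pa : probU pa_ch fch (pt o0) (Pch p1e3 p2e3) (ev_v_pa pa_ch o1 false y) = 3/4.
  rewrite probU_ch !sum3I /ev_v_pa !ev_pa_o1 !mk0 !mk1 Hy /pt /p1e3 /p2e3 /tab3 /=; lra.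
have Pb : probU pa_ch fch (pt o1) (Pch p1e3 p2e3) (ev_v_pa pa_ch o1 false y) = 1/2.
  rewrite probU_ch !sum3I /ev_v_pa !ev_pa_o1 !mk0 !mk1 Hy /pt /p1e3 /p2e3 /tab3 /=; lra.
have ns : o1 \notin sources pa_ch by rewrite in_sources.
have := H o1 ns false y (pt o0) (pt o1) (pt_init _) (pt_init _).
rewrite /condU !P1 // Pa Pb => /(_ ltr01 ltr01).
by rewrite !divr1 => E; move: E; lra.
Qed.
End Ex3.

Theorem mainTheorem1 (R : realType) :
  (forall (V A B : finType) (pa : V -> {set V}) (f : A -> B)
          (alpha : V -> A -> R) (P : V -> {ffun V -> A} -> A -> R),
      acyclic pa -> (#|B| < #|A|)%N -> (forall b, exists a, f a = b) ->
      is_BN pa alpha P -> full_support pa alpha P ->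
      (D3 pa f P -> D2 pa f P) /\ (D2 pa f P -> D1 pa f alpha P))
  /\
  (exists (V A B : finType) (pa : V -> {set V}) (f : A -> B)
          (alpha : V -> A -> R) (P : V -> {ffun V -> A} -> A -> R),
      [/\ acyclic pa /\ (#|B| < #|A|)%N, (forall b, exists a, f a = b),
          is_BN pa alpha P, full_support pa alpha P &
          D1 pa f alpha P /\ ~ D2 pa f P])
  /\
  (exists (V A B : finType) (pa : V -> {set V}) (f : A -> B)
          (alpha : V -> A -> R) (P : V -> {ffun V -> A} -> A -> R),
      [/\ acyclic pa /\ (#|B| < #|A|)%N, (forall b, exists a, f a = b),
          is_BN pa alpha P, full_support pa alpha P &
          D2 pa f P /\ ~ D3 pa f P]).
Proof.
split; [|split].
- move=> V A B pa f alpha P _ _ _ [Hi _] _; split; first by case.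
  by move=> H; apply: H.
- exists _, _, _, pa_ch, fch, (@al2 R), (Pch (@p1e2 R) (@p2e2 R)).
  split; [split; [exact: acyclic_ch | exact: card_ch] | exact: surj_ch |
          exact: ex2_BN | exact: ex2_full | split; [exact: ex2_D1 | exact: ex2_notD2]].
- exists _, _, _, pa_ch, fch, (@al3 R), (Pch (@p1e3 R) (@p2e3 R)).
  split; [split; [exact: acyclic_ch | exact: card_ch] | exact: surj_ch |
          exact: ex3_BN | exact: ex3_full | split; [exact: ex3_D2 | exact: ex3_notD3]].
Qed.
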